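(* Let $a<b$ be real numbers, $\mathbb{I}=[a,b]$, and let $M\ge 1$ and $N\ge 1$ be integers. Let $f:(\mathbb{I}^M)^N\to\mathbb{R}$ be a continuous set function with respect to the Hausdorff distance $d_H$. Then for every $\epsilon>0$ there exist a positive integer $K$, Gaussian kernels $\phi_1,\dots,\phi_K$ (i.e. vectors $\boldsymbol{\mu}_1,\dots,\boldsymbol{\mu}_K\in\mathbb{R}^M$ and positive semi-definite matrices $\boldsymbol{\Sigma}_1,\dots,\boldsymbol{\Sigma}_K\in\mathbb{R}^{M\times M}$), and a function $\gamma:\mathbb{R}^K\to\mathbb{R}$ such that for every $\mathcal{X}=(\boldsymbol{x}_1,\dots,\boldsymbol{x}_N)\in(\mathbb{I}^M)^N$, $$\Bigl|f(\mathcal{X})-\gamma\Bigl(\mathrm{MAX}\bigl(\{\phi_k(\boldsymbol{x}_i)\}_{k=1}^K\bigr)\Bigr)\Bigr|<\epsilon .$$ In particular, $g=\gamma\circ\mathrm{MAX}$ is a symmetric function of $(\boldsymbol{x}_1,\dots,\boldsymbol{x}_N)$, i.e. invariant under permutations of the points.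
   Context: A Gaussian kernel with mean $\boldsymbol{\mu}_k\in\mathbb{R}^M$ and positive semi-definite ''inverse covariance'' matrix $\boldsymbol{\Sigma}_k\in\mathbb{R}^{M\times M}$ is the function $\phi_k:\mathbb{R}^M\to(0,1]$, $\phi_k(\boldsymbol{x})=\exp\!\bigl(-(\boldsymbol{x}-\boldsymbol{\mu}_k)^\top\boldsymbol{\Sigma}_k(\boldsymbol{x}-\boldsymbol{\mu}_k)\bigr)$. For points $\boldsymbol{x}_1,\dots,\boldsymbol{x}_N$, $\mathrm{MAX}(\{\phi_k(\boldsymbol{x}_i)\}_{k=1}^K)\in\mathbb{R}^K$ denotes the vector whose $k$-th coordinate is $\max_{1\le i\le N}\phi_k(\boldsymbol{x}_i)$. An $N$-tuple $\mathcal{X}=(\boldsymbol{x}_1,\dots,\boldsymbol{x}_N)$ is identified with the finite set $\{\boldsymbol{x}_1,\dots,\boldsymbol{x}_N\}\subset\mathbb{R}^M$, and $d_H(\mathcal{X},\mathcal{X}')=\max\bigl(\sup_{x\in\mathcal{X}}\inf_{x'\in\mathcal{X}'}\|x-x'\|,\ \sup_{x'\in\mathcal{X}'}\inf_{x\in\mathcal{X}}\|x-x'\|\bigr)$ is the Hausdorff distance between these sets (Euclidean norm). A function $f$ on tuples of points is a continuous set function w.r.t. $d_H$ if for every $\mathcal{X}$ and every $\epsilon>0$ there is $\delta>0$ such that $d_H(\mathcal{X},\mathcal{X}')<\delta$ implies $|f(\mathcal{X})-f(\mathcal{X}')|<\epsilon$. *)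

(* Defs.v *)
From HB Require Import structures.
From mathcomp Require Import all_boot all_order all_algebra all_fingroup.
From mathcomp Require Import all_classical all_reals all_analysis.
Set Implicit Arguments. Unset Strict Implicit. Unset Printing Implicit Defensive.
Import Order.TTheory GRing.Theory Num.Theory.
Local Open Scope ring_scope.
Local Open Scope classical_set_scope.

Section Defs.
Variable R : realType.

Definition eucl_norm (M : nat) (v : 'rV[R]_M) : R :=
  Num.sqrt (\sum_(i < M) (v ord0 i) ^+ 2).

Definition psd (M : nat) (S : 'M[R]_M) : Prop :=
  S^T = S /\ forall v : 'rV[R]_M, 0 <= (v *m S *m v^T) ord0 ord0.

Definition gauss (M : nat) (mu : 'rV[R]_M) (S : 'M[R]_M) (x : 'rV[R]_M) : R :=
  expR (- ((x - mu) *m S *m (x - mu)^T) ord0 ord0).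

Definition in_cube (a b : R) (M N : nat) (X : 'I_N -> 'rV[R]_M) : Prop :=
  forall i j, a <= X i ord0 j <= b.

Definition dist_pt_set (M N : nat) (x : 'rV[R]_M) (X' : 'I_N -> 'rV[R]_M) : R :=
  inf [set eucl_norm (x - X' j) | j in [set: 'I_N]].

Definition hausdorff (M N : nat) (X X' : 'I_N -> 'rV[R]_M) : R :=
  Num.max (\big[Num.max/0]_(i < N) dist_pt_set (X i) X')
          (\big[Num.max/0]_(j < N) dist_pt_set (X' j) X).

Definition hausdorff_continuous (a b : R) (M N : nat)
  (f : ('I_N -> 'rV[R]_M) -> R) : Prop :=
  forall X, in_cube a b X -> forall eps : R, 0 < eps ->
    exists2 delta : R, 0 < delta &
      forall X', in_cube a b X' -> hausdorff X X' < delta -> `|f X - f X'| < eps.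

Definition max_feat (M N K : nat) (mu : 'I_K -> 'rV[R]_M) (S : 'I_K -> 'M[R]_M)
  (X : 'I_N -> 'rV[R]_M) : 'rV[R]_K :=
  \row_(k < K) \big[Num.max/0]_(i < N) gauss (mu k) (S k) (X i).

End Defs.

(* Main.v *)
Require Import Defs.
From HB Require Import structures.
From mathcomp Require Import all_boot all_order all_algebra all_fingroup.
From mathcomp Require Import all_classical all_reals all_analysis.
From mathcomp Require Import ring lra.
Import numFieldNormedType.Exports.
Import Order.TTheory GRing.Theory Num.Theory.
Local Open Scope ring_scope.

Set Implicit Arguments.
Unset Strict Implicit.
Section S.
Local Open Scope classical_set_scope.
Variable R : realType.
Variables (M N : nat).

Lemma ball_entry (x y : 'rV['rV[R]_M]_N) (e : R) : ball x e y -> forall i l, `|x ord0 i ord0 l - y ord0 i ord0 l| < e.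
Proof.
move=> Hb i l. rewrite /ball /= in Hb.
case: Hb => _ /(_ ord0 i) [_ /(_ ord0 l)]. by rewrite /ball /=.
Qed.

Definition cubeM (a b : R) := ([set w : 'rV[R]_M | forall l, `[a, b]%classic (w ord0 l)])%classic.
Definition cubeK (a b : R) := ([set v : 'rV['rV[R]_M]_N | forall i, cubeM a b (v ord0 i)])%classic.

Lemma cubeK_compact a b : compact (cubeK a b).
Proof.
apply: (@rV_compact _ _ (fun=> cubeM a b)) => _.
apply: (@rV_compact _ _ (fun=> `[a, b]%classic)) => _.
exact: segment_compact.
Qed.

Definition close (d : R) (X Y : 'I_N -> 'rV[R]_M) : Prop :=
  (forall i, exists k, forall l, `|X i ord0 l - Y k ord0 l| <= d) /\
  (forall k, exists i, forall l, `|Y k ord0 l - X i ord0 l| <= d).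

Lemma eucl_le (v : 'rV[R]_M) (d : R) : (0 < M)%N -> 0 <= d ->
  (forall l, `|v ord0 l| <= d) -> eucl_norm v <= M%:R * d.
Proof.
move=> M0 d0 H.
have Md : 0 <= M%:R * d by rewrite mulr_ge0.
rewrite /eucl_norm -(ger0_norm Md) -sqrtr_sqr ler_wsqrtr //.
apply: (@le_trans _ _ (\sum_(i < M) d ^+ 2)).
  apply: ler_sum => l _.
  rewrite -real_normK ?num_real; have := H l; have := normr_ge0 (v ord0 l); nra.
rewrite sumr_const card_ord -mulr_natl.
have M1 : 1 <= (M%:R : R) by rewrite ler1n.
nra.
Qed.

Lemma haus_le (X Y : 'I_N -> 'rV[R]_M) (d : R) : (0 < M)%N -> 0 <= d ->
  close d X Y -> hausdorff X Y <= M%:R * d.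
Proof.
move=> M0 d0 [H1 H2].
have Md : 0 <= M%:R * d by rewrite mulr_ge0.
have key : forall (x : 'rV[R]_M) (Z : 'I_N -> 'rV[R]_M) k,
    (forall l, `|x ord0 l - Z k ord0 l| <= d) -> dist_pt_set x Z <= M%:R * d.
  move=> x Z k Hk.
  rewrite /dist_pt_set.
  set S := (X in inf X).
  have lb : has_lbound S.
    by exists 0 => _ [j _ <-]; rewrite /eucl_norm sqrtr_ge0.
  apply: (@le_trans _ _ (eucl_norm (x - Z k))).
    by apply: (ge_inf lb); exists k.
  apply: eucl_le => // l; by rewrite !mxE.
rewrite /hausdorff ge_max; apply/andP; split; apply: bigmax_le => // i _.
  by have [k Hk] := H1 i; apply: key Hk.
by have [k Hk] := H2 i; apply: key Hk.
Qed.

Definition tup (v : 'rV['rV[R]_M]_N) : 'I_N -> 'rV[R]_M := fun i => v ord0 i.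

Lemma cubeK_in (a b : R) v : cubeK a b v <-> in_cube a b (tup v).
Proof.
split.
  by move=> H i j; have := H i j; rewrite /= in_itv.
by move=> H i j; rewrite /= in_itv; apply: H.
Qed.

Lemma tup_row (X : 'I_N -> 'rV[R]_M) : tup (\row_i X i) = X.
Proof. by apply: funext => i; rewrite /tup mxE. Qed.

Lemma unif (a b : R) (f : ('I_N -> 'rV[R]_M) -> R) : (0 < M)%N ->
  hausdorff_continuous a b f -> forall eps : R, 0 < eps ->
  exists2 d : R, 0 < d & forall X Y, in_cube a b X -> in_cube a b Y ->
    close d X Y -> `|f X - f Y| < eps.
Proof.
move=> M0 hc eps eps0.
pose P (d : R) (v : 'rV['rV[R]_M]_N) := forall w, cubeK a b w ->
  close d (tup v) (tup w) -> `|f (tup v) - f (tup w)| < eps.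
have NC := (proj2 (near_covering_withinP (cubeK a b)))
  (proj1 (compact_near_coveringP (cubeK a b)) (cubeK_compact (a:=a) (b:=b))).
have H : \forall d \near (0:R)^'+, cubeK a b `<=` P d.
  apply: NC => x Kx.
  have [delta delta0 Hd] := hc _ (proj1 (cubeK_in a b x) Kx) (eps / 2)
    ltac:(by rewrite divr_gt0).
  set e := delta / (4 * M%:R).
  have Mpos : 0 < (M%:R : R) by rewrite ltr0n.
  have e0 : 0 < e by rewrite divr_gt0 // mulr_gt0.
  have Me : M%:R * e = delta / 4.
    by rewrite /e; field; rewrite gt_eqF.
  near=> y d => /= Ky w Kw [C1 C2].
  have bxy : @ball R ('rV['rV[R]_M]_N) x e y by near: y; exact: nbhsx_ballx.
  have d0 : 0 < d by near: d; exact: nbhs_right_gt.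
  have de : d < e by near: d; exact: nbhs_right_lt.
  have be := ball_entry bxy.
  have h1 : `|f (tup x) - f (tup y)| < eps / 2.
    apply: Hd; first exact/cubeK_in.
    apply: (le_lt_trans (haus_le (d := e) M0 _ _)); first exact: ltW.
      split=> i; exists i => l; rewrite /tup; first exact: ltW.
      by rewrite distrC; apply: ltW.
    rewrite Me; lra.
  have h2 : `|f (tup x) - f (tup w)| < eps / 2.
    apply: Hd; first exact/cubeK_in.
    apply: (le_lt_trans (haus_le (d := e + e) M0 _ _)); first lra.
      split=> i.
        have [k Hk] := C1 i; exists k => l.
        rewrite /tup in Hk *.
        have := be i l; have := Hk l.
        have := ler_normD (x ord0 i ord0 l - y ord0 i ord0 l) (y ord0 i ord0 l - w ord0 k ord0 l).
        rewrite addrA subrK; lra.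
      have [k Hk] := C2 i; exists k => l.
      rewrite /tup in Hk *.
      have := be k l; have := Hk l.
      have := ler_normD (w ord0 i ord0 l - y ord0 k ord0 l) (y ord0 k ord0 l - x ord0 k ord0 l).
      rewrite addrA subrK distrC [`|y _ _ _ _ - x _ _ _ _|]distrC; lra.
    rewrite mulrDr Me; lra.
  rewrite distrC in h1.
  have T := ler_normD (f (tup y) - f (tup x)) (f (tup x) - f (tup w)).
  rewrite addrA subrK in T. lra.
have [d [d0 Hd]] := filter_ex (filterI (nbhs_right_gt 0) H).
exists d => // X Y HX HY C.
have := Hd (\row_i X i) ltac:(by apply/cubeK_in; rewrite tup_row) (\row_i Y i)
  ltac:(by apply/cubeK_in; rewrite tup_row).
by rewrite /P !tup_row; apply.
Unshelve. all: end_near.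
Qed.
Lemma quad1 (v : 'rV[R]_M) : (v *m 1%:M *m v^T) ord0 ord0 = \sum_l (v ord0 l) ^+ 2.
Proof. by rewrite mulmx1 !mxE; apply: eq_bigr => l _; rewrite !mxE expr2. Qed.

Definition grid_mu (a h : R) (T : nat) (k : 'I_#|{ffun 'I_M -> 'I_T.+1}|) : 'rV[R]_M :=
  \row_l (a + ((enum_val k) l : nat)%:R * h).

Lemma half_close (a b h : R) (X Y : 'I_N -> 'rV[R]_M) : (0 < M)%N -> 0 < h ->
  in_cube a b X ->
  max_feat (grid_mu (T:=Num.trunc ((b - a) / h)) a h) (fun=> 1%:M) X =
  max_feat (grid_mu (T:=Num.trunc ((b - a) / h)) a h) (fun=> 1%:M) Y ->
  forall i, exists k, forall l, `|X i ord0 l - Y k ord0 l| <= (M%:R + 1) * h.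
Proof.
move=> M0 h0 HX E i.
set T := Num.trunc ((b - a) / h).
set mu := grid_mu (T:=T) a h.
have tb : forall l, (Num.trunc ((X i ord0 l - a) / h) < T.+1)%N.
  move=> l; rewrite ltnS; apply: le_truncn.
  rewrite ler_pM2r ?invr_gt0 //; case/andP: (HX i l) => _; lra.
pose g : {ffun 'I_M -> 'I_T.+1} := [ffun l => Ordinal (tb l)].
pose k := enum_rank g.
have mul : forall l, mu k ord0 l = a + (Num.trunc ((X i ord0 l - a) / h))%:R * h.
  by move=> l; rewrite /mu /grid_mu mxE /k enum_rankK ffunE.
have nearl : forall l, `|X i ord0 l - mu k ord0 l| <= h.
  move=> l; rewrite mul.
  set t := (X i ord0 l - a) / h.
  have t0 : 0 <= t by rewrite divr_ge0 //; case/andP: (HX i l) => ? _; lra.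
  have t1 : (Num.trunc t)%:R <= t by rewrite truncn_le.
  have t2 : t < (Num.trunc t)%:R + 1 by rewrite natr1 truncnS_gt.
  have th : t * h = X i ord0 l - a by rewrite /t mulrAC -mulrA mulfV ?gt_eqF ?mulr1.
  set n := (Num.trunc t)%:R in t1 t2 *.
  rewrite ler_norml; apply/andP; split; nra.
have c0 : 0 < gauss (mu k) 1%:M (X i) by apply: expR_gt0.
have Fx : gauss (mu k) 1%:M (X i) <= max_feat mu (fun=> 1%:M) Y ord0 k.
  rewrite -E mxE; exact: (le_bigmax _ (fun j => gauss (mu k) 1%:M (X j)) i).
have [j Hj] : exists j, gauss (mu k) 1%:M (X i) <= gauss (mu k) 1%:M (Y j).
  apply: contrapT => /forallNP Hn.
  move: Fx; rewrite mxE; apply/negP; rewrite -ltNge.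
  apply: bigmax_lt => // j _; rewrite ltNge; apply/negP; exact: Hn.
exists j => l.
move: Hj; rewrite /gauss ler_expR lerN2 !quad1 => Hq.
have qx : \sum_l0 ((X i - mu k) ord0 l0) ^+ 2 <= M%:R * h ^+ 2.
  apply: (@le_trans _ _ (\sum_(l0 < M) h ^+ 2)).
    apply: ler_sum => l0 _.
    rewrite (_ : (X i - mu k) ord0 l0 = X i ord0 l0 - mu k ord0 l0); last by rewrite !mxE.
    rewrite -real_normK ?num_real //; have := nearl l0.
    have := normr_ge0 (X i ord0 l0 - mu k ord0 l0); nra.
  by rewrite sumr_const card_ord mulr_natl.
have ql : ((Y j - mu k) ord0 l) ^+ 2 <= \sum_l0 ((Y j - mu k) ord0 l0) ^+ 2.
  rewrite (bigD1 l) //= lerDl; apply: sumr_ge0 => l0 _; exact: sqr_ge0.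
have M1 : 1 <= (M%:R : R) by rewrite ler1n.
have yl : `|Y j ord0 l - mu k ord0 l| <= M%:R * h.
  have := le_trans ql (le_trans Hq qx).
  rewrite (_ : (Y j - mu k) ord0 l = Y j ord0 l - mu k ord0 l); last by rewrite !mxE.
  rewrite -real_normK ?num_real //.
  have MM : (M%:R : R) <= M%:R ^+ 2 by nra.
  have Mh : M%:R * h ^+ 2 <= (M%:R * h) ^+ 2.
    by rewrite exprMn ler_wpM2r // sqr_ge0.
  have Mh0 : 0 <= M%:R * h by nra.
  move: Mh Mh0; set m := M%:R * h; set z := `|_|.
  have := normr_ge0 (Y j ord0 l - mu k ord0 l); rewrite -/z.
  move=> z0 Mh Mh0 Hz; nra.
have := ler_normD (X i ord0 l - mu k ord0 l) (mu k ord0 l - Y j ord0 l).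
rewrite addrA subrK distrC [`|mu _ _ _ - _|]distrC.
have := nearl l; lra.
Qed.
End S.
Unset Implicit Arguments.
Set Strict Implicit.


Theorem lemma1 (R : realType) (a b : R) (M N : nat)
  (f : ('I_N -> 'rV[R]_M) -> R) :
  a < b -> (0 < M)%N -> (0 < N)%N ->
  hausdorff_continuous a b f ->
  forall eps : R, 0 < eps ->
  exists (K : nat) (mu : 'I_K -> 'rV[R]_M) (Sigma : 'I_K -> 'M[R]_M)
         (gamma : 'rV[R]_K -> R),
    [/\ (0 < K)%N,
        (forall k, psd (Sigma k)),
        (forall X, in_cube a b X ->
           `|f X - gamma (max_feat mu Sigma X)| < eps) &
        (forall (s : 'S_N) (X : 'I_N -> 'rV[R]_M),
           gamma (max_feat mu Sigma (fun i => X (s i))) =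
           gamma (max_feat mu Sigma X))].
Proof.
move=> ab M0 N0 hc eps eps0.
have [d d0 Hd] := unif M0 hc eps0.
have M1 : 0 < (M%:R : R) + 1 by rewrite ltr_wpDl // ler0n.
set h := d / (M%:R + 1).
have h0 : 0 < h by rewrite divr_gt0.
have dh : (M%:R + 1) * h = d by rewrite /h mulrC -mulrA mulVf ?mulr1 // gt_eqF.
set T := Num.trunc ((b - a) / h).
exists #|{ffun 'I_M -> 'I_T.+1}|, (grid_mu (T:=T) a h), (fun=> 1%:M).
pose feat : ('I_N -> 'rV[R]_M) -> 'rV[R]_#|{ffun 'I_M -> 'I_T.+1}| :=
  max_feat (grid_mu (T:=T) a h) (fun=> 1%:M).
exists (fun v => match pselect (exists Y, in_cube a b Y /\ feat Y = v) with
  | left e => f (proj1_sig (cid e)) | right _ => 0 end).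
split.
- by apply/card_gt0P; exists [ffun=> ord0].
- move=> k; split; first exact: trmx1.
  by move=> v; rewrite quad1; apply: sumr_ge0 => l _; exact: sqr_ge0.
- move=> X HX; case: pselect => [e|nex]; last by exfalso; apply: nex; exists X.
  case: (cid e) => Y [HY EY] /=.
  apply: Hd => //; split.
    by rewrite -dh; apply: (half_close M0 h0 HX); rewrite -EY.
  by rewrite -dh; apply: (half_close M0 h0 HY EY).
- move=> s X.
  suff E : feat (fun i => X (s i)) = feat X by move: E; rewrite /feat => ->.
  apply/rowP => k; rewrite !mxE; apply/le_anti/andP; split;
    apply: bigmax_le => [|i _]; rewrite ?bigmax_ge_id //.
    exact: (le_bigmax _ (fun j => gauss (grid_mu (T:=T) a h k) 1%:M (X j)) (s i)).
  rewrite -{1}(permKV s i).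
  exact: (le_bigmax _ (fun j => gauss (grid_mu (T:=T) a h k) 1%:M (X (s j))) (s^-1 i)%g).
Qed.
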